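(* There exist a positive integer $N$ and a doubly-stochastic $N\times N$ matrix $A$ such that $$\mathrm{per}(A)\ <\ LMS(A):=\prod_{1\le i\le N}\ \sum_{1\le j\le N}A(i,j)\prod_{k\ne i}\bigl(1-A(k,j)\bigr).$$
   Context: A doubly-stochastic matrix is an entrywise non-negative square matrix all of whose row and column sums equal $1$; $\mathrm{per}$ is the permanent. (This disproves the conjecture that $\mathrm{per}(A)\ge LMS(A)$ for all doubly-stochastic $A$.) *)

(* Defs.v *)
From HB Require Import structures.
From mathcomp Require Import all_boot all_order all_algebra all_fingroup.
From Stdlib Require Import Reals.
From mathcomp Require Import Rstruct.
Set Implicit Arguments. Unset Strict Implicit. Unset Printing Implicit Defensive.
Import Order.TTheory GRing.Theory Num.Theory.
Local Open Scope ring_scope.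

Definition per (T : comNzRingType) (n : nat) (A : 'M[T]_n) : T :=
  \sum_(s : 'S_n) \prod_(i < n) A i (s i).

Definition doubly_stochastic (T : numDomainType) (n : nat) (A : 'M[T]_n) : Prop :=
  (forall i j, 0 <= A i j) /\
  (forall i, \sum_(j < n) A i j = 1) /\
  (forall j, \sum_(i < n) A i j = 1).

Definition LMS (T : comNzRingType) (n : nat) (A : 'M[T]_n) : T :=
  \prod_(i < n) \sum_(j < n) (A i j * \prod_(k < n | k != i) (1 - A k j)).

(* Main.v *)
Require Import Defs.
From HB Require Import structures.
From mathcomp Require Import all_boot all_order all_algebra all_fingroup.
From Stdlib Require Import Reals.
From mathcomp Require Import Rstruct.
From mathcomp Require Import ring lra.
Import Order.TTheory GRing.Theory Num.Theory.
Local Open Scope ring_scope.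

Lemma fiber_card m (f : {ffun 'I_m -> 'I_(m+m)}) :
  leq #|[pred t : 'S_(m+m) | [ffun j => t (lshift m j)] == f]| m`!.
Proof.
set P := [pred t : 'S_(m+m) | _].
case: (pickP P) => [t0 Pt0 | P0]; last by rewrite eq_card0.
set L := [set lshift m j | j : 'I_m].
have cL : #|~: L| = m.
  have := cardsC L; rewrite card_imset; last exact: lshift_inj.
  by rewrite !card_ord => /eqP; rewrite eqn_add2l => /eqP.
apply: (@leq_trans #|[set (s * t0)%g | s in perm_on (~: L)]|).
  apply: subset_leq_card; apply/subsetP => t Pt.
  apply/imsetP; exists (t * t0^-1)%g; last by rewrite -mulgA mulVg mulg1.
  apply/subsetP => x; rewrite inE => hx; rewrite inE; apply/negP => xL.
  case/imsetP: xL => j _ xE; move: hx; rewrite permM.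
  have : t x = t0 x.
    move: Pt Pt0; rewrite !inE /P /= => /eqP <- /eqP /ffunP /(_ j).
    by rewrite !ffunE xE.
  by move=> ->; rewrite permK eqxx.
by apply: (leq_trans (leq_imset_card _ _)); rewrite card_perm cL.
Qed.

Lemma per_cols (F : comNzRingType) n (B : 'M[F]_n) : per B = \sum_(t : 'S_n) \prod_j B (t j) j.
Proof.
rewrite /per [RHS](reindex_inj invg_inj) /=; apply: eq_bigr => s _.
rewrite [RHS](reindex_inj (@perm_inj _ s)) /=; apply: eq_bigr => i _.
by rewrite permK.
Qed.

Lemma per_bound (F : realFieldType) m (B : 'M[F]_(m+m)) (c : F) :
  0 <= c -> (forall i j, 0 <= B i j) -> (forall i j, B i (rshift m j) = c) ->
  per B <= (m`!)%:R * c ^+ m * \prod_(j < m) \sum_i B i (lshift m j).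
Proof.
move=> c0 B0 Bc; rewrite per_cols.
have E2 : forall t : 'S_(m+m), \prod_j B (t j) j =
   (\prod_(j < m) B (t (lshift m j)) (lshift m j)) * c ^+ m.
  move=> t; rewrite big_split_ord /=; congr (_ * _).
  by rewrite (eq_bigr (fun _ => c)) ?prodr_const ?card_ord // => j _; rewrite Bc.
rewrite (eq_bigr _ (fun t _ => E2 t)) -mulr_suml mulrAC ler_wpM2r //.
  by rewrite exprn_ge0.
pose G (f : {ffun 'I_m -> 'I_(m+m)}) := \prod_(j < m) B (f j) (lshift m j).
have -> : \prod_(j < m) \sum_i B i (lshift m j) = \sum_f G f.
  by rewrite bigA_distr_bigA.
rewrite (eq_bigr (fun t : 'S_(m+m) => G [ffun j => t (lshift m j)])); last first.
  by move=> t _; rewrite /G; apply: eq_bigr => j _; rewrite ffunE.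
rewrite (partition_big (fun t : 'S_(m+m) => [ffun j => t (lshift m j)]) predT) //=.
rewrite mulr_sumr; apply: ler_sum => f _.
rewrite (eq_bigr (fun _ => G f)); last by move=> t /eqP ->.
have G0 : 0 <= G f by apply: prodr_ge0 => j _.
rewrite sumr_const -[G f *+ _]mulr_natl ler_wpM2r // ler_nat.
apply: (leq_trans _ (fiber_card m f)); apply: subset_leq_card; apply/subsetP => t.
by rewrite !inE.
Qed.

Lemma weier (F : realFieldType) (I : finType) (P : pred I) (x : I -> F) :
  (forall i, P i -> 0 <= x i <= 1) ->
  1 - \sum_(i | P i) x i <= \prod_(i | P i) (1 - x i).
Proof.
move=> hx.
suff [] : 0 <= \sum_(i | P i) x i /\ 1 - \sum_(i | P i) x i <= \prod_(i | P i) (1 - x i) by [].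
apply: (big_rec2 (fun s p => 0 <= s /\ 1 - s <= p)); first by split; lra.
move=> i s p Pi [s0 h]; have /andP[x0 x1] := hx i Pi; split; first lra.
nra.
Qed.






Section Mat.
Variable F : realFieldType.
Variable m : nat.
Hypothesis hm : (0 < m)%nat.

Definition cc : F := ((m+m)%:R)^-1.
Definition Am : 'M[F]_(m+m) := \matrix_(i, j)
  (if (j < m)%nat then (if (i %% m == j)%nat then 2^-1 else 0) else cc).

Lemma Am_ls i (j : 'I_m) : Am i (lshift m j) = if (i %% m == j)%nat then 2^-1 else 0.
Proof. by rewrite mxE /= ltn_ord. Qed.

Lemma Am_rs i (j : 'I_m) : Am i (rshift m j) = cc.
Proof. by rewrite mxE /= ltnNge leq_addr. Qed.

Lemma cc_ge0 : 0 <= cc.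
Proof. by rewrite /cc invr_ge0 ler0n. Qed.

Lemma mcc : m%:R * cc = 2^-1.
Proof.
rewrite /cc natrD.
have h : (m%:R : F) != 0 by rewrite pnatr_eq0 -lt0n.
field. by rewrite -mulr2n mulrn_eq0 negb_or h.
Qed.

Lemma cc_le1 : cc <= 1.
Proof.
rewrite /cc invr_le1 ?ler1n ?ltr0n ?unitfE ?pnatr_eq0 -?lt0n ?addn_gt0 ?hm //.
Qed.

Lemma Am_ge0 i j : 0 <= Am i j.
Proof. rewrite mxE; case: ifP => _; [case: ifP => _ //; by rewrite invr_ge0 ler0n|exact: cc_ge0]. Qed.

Lemma Am_le1 i j : Am i j <= 1.
Proof. rewrite mxE; case: ifP => _; [case: ifP => _ //; by rewrite invf_le1 ?ltr0n ?ler1n|exact: cc_le1]. Qed.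

Lemma sum_pick (k : nat) (hk : (k < m)%nat) :
  \sum_(j < m) (if (k == j)%nat then (2^-1 : F) else 0) = 2^-1.
Proof.
rewrite (bigD1 (Ordinal hk)) //= eqxx big1 ?addr0 // => j hj.
case: ifP => // /eqP e; move: hj; suff -> : j = Ordinal hk by rewrite eqxx.
by apply: val_inj.
Qed.

Lemma Am_row i : \sum_j Am i j = 1.
Proof.
rewrite big_split_ord /=.
rewrite (eq_bigr (fun j : 'I_m => if (i %% m == j)%nat then 2^-1 else 0)); last by move=> j _; rewrite Am_ls.
rewrite sum_pick ?ltn_pmod //.
rewrite (eq_bigr (fun _ => cc)); last by move=> j _; rewrite Am_rs.
rewrite sumr_const card_ord -[cc *+ m]mulr_natl mcc; by field.
Qed.

Lemma Am_col_ls (j : 'I_m) : \sum_i Am i (lshift m j) = 1.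
Proof.
rewrite big_split_ord /=.
rewrite (eq_bigr (fun i : 'I_m => if (i == j)%nat then 2^-1 else 0)); last first.
  by move=> i _; rewrite Am_ls /= modn_small.
rewrite [X in _ + X](eq_bigr (fun i : 'I_m => if (i == j)%nat then 2^-1 else 0)); last first.
  by move=> i _; rewrite Am_ls /= modnDl modn_small.
have E : \sum_(i < m) (if (i == j)%nat then (2^-1 : F) else 0) = 2^-1.
  rewrite (bigD1 j) //= eqxx big1 ?addr0 // => i hi; case: ifP => // /eqP e.
  by move: hi; rewrite (_ : i = j) ?eqxx //; apply: val_inj.
by rewrite E; field.
Qed.

Lemma Am_col_rs (j : 'I_m) : \sum_i Am i (rshift m j) = 1.
Proof.
rewrite (eq_bigr (fun _ => cc)); last by move=> i _; rewrite Am_rs.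
by rewrite sumr_const card_ord /cc -[_ *+ (m+m)]mulr_natl mulfV // pnatr_eq0 -lt0n addn_gt0 hm.
Qed.

Lemma Am_col j : \sum_i Am i j = 1.
Proof. by case: (split_ordP j) => k ->; [exact: Am_col_ls | exact: Am_col_rs]. Qed.

Lemma Am_ds : doubly_stochastic Am.
Proof. split; [exact: Am_ge0 | split; [exact: Am_row | exact: Am_col]]. Qed.

Lemma Am_row_lms (i : 'I_(m+m)) :
  4^-1 + 2^-1 * (1 - cc) ^+ (m+m).-1 <=
  \sum_(j < m+m) (Am i j * \prod_(k < m+m | k != i) (1 - Am k j)).
Proof.
rewrite big_split_ord /=.
have S2 : \sum_(j < m) (Am i (rshift m j) * \prod_(k < m+m | k != i) (1 - Am k (rshift m j)))
    = 2^-1 * (1-cc)^+(m+m).-1.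
  rewrite (eq_bigr (fun _ => cc * (1-cc)^+(m+m).-1)); last first.
    move=> j _; rewrite Am_rs; congr (_ * _).
    rewrite (eq_bigr (fun _ => 1 - cc)); last by move=> k _; rewrite Am_rs.
    by rewrite prodr_const cardC1 card_ord.
  by rewrite sumr_const card_ord -[_ *+ m]mulr_natl mulrA mcc.
rewrite S2 lerD2r.
pose j0 := Ordinal (ltn_pmod i hm).
rewrite (bigD1 j0) //= -[X in X <= _]addr0; apply: lerD; last first.
  apply: sumr_ge0 => j _; apply: mulr_ge0; first exact: Am_ge0.
  by apply: prodr_ge0 => k _; rewrite subr_ge0 Am_le1.
have a0 : Am i (lshift m j0) = 2^-1 by rewrite Am_ls eqxx.
rewrite a0.
have hs : \sum_(k < m+m | k != i) Am k (lshift m j0) = 2^-1.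
  have := Am_col_ls j0; rewrite (bigD1 i) //= a0 => h.
  apply: (addrI (2^-1)); rewrite h; by field.
have hp := @weier F _ (fun k : 'I_(m+m) => k != i) (fun k => Am k (lshift m j0)).
rewrite hs in hp.
have hp' : 1 - 2^-1 <= \prod_(k < m+m | k != i) (1 - Am k (lshift m j0)).
  by apply: hp => k _; rewrite Am_ge0 Am_le1.
have -> : (4^-1 : F) = 2^-1 * (1 - 2^-1) by field.
by rewrite ler_wpM2l // invr_ge0 ler0n.
Qed.

Lemma Am_lms : (4^-1 + 2^-1 * (1 - cc) ^+ (m+m).-1) ^+ (m+m) <= LMS Am.
Proof.
have -> : (4^-1 + 2^-1 * (1 - cc) ^+ (m+m).-1) ^+ (m+m) =
   \prod_(i < m+m) (4^-1 + 2^-1 * (1 - cc) ^+ (m+m).-1) by rewrite prodr_const card_ord.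
rewrite /LMS; apply: ler_prod => i _; rewrite Am_row_lms andbT.
apply: addr_ge0; first by rewrite invr_ge0 ler0n.
apply: mulr_ge0; first by rewrite invr_ge0 ler0n.
by rewrite exprn_ge0 // subr_ge0 cc_le1.
Qed.

Lemma Am_per : per Am <= m`!%:R * cc ^+ m.
Proof.
have := @per_bound F m Am cc cc_ge0 Am_ge0 Am_rs.
by rewrite big1 ?mulr1 // => j _; rewrite Am_col_ls.
Qed.

End Mat.

Lemma natRZ (k : nat) : (k%:R : R) = IZR (Z.of_nat k).
Proof. by rewrite -INRE INR_IZR_INZ. Qed.

Lemma powRE (x : R) (n : nat) : pow x n = x ^+ n.
Proof. by elim: n => [|n IH] //=; rewrite exprS IH. Qed.

Lemma natXZ (k n : nat) : (k%:R : R) ^+ n = IZR (Z.of_nat k ^ Z.of_nat n).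
Proof. by rewrite -pow_IZR -natRZ powRE. Qed.

Fixpoint Zfact (n : nat) : Z := match n with 0 => 1%Z | S k => (Z.of_nat (S k) * Zfact k)%Z end.

Lemma factZ (n : nat) : (n`!%:R : R) = IZR (Zfact n).
Proof.
elim: n => [|n IH]; first by [].
by rewrite factS natrM IH natRZ mult_IZR.
Qed.

Lemma gen1 (F : realFieldType) : (1 - 300%:R^-1 : F) = 299%:R / 300%:R.
Proof. by field. Qed.

Lemma L1 : (3678%:R / 10000%:R : R) <= (1 - 300%:R^-1)^+299.
Proof.
rewrite gen1 expr_div_n ler_pdivlMr ?exprn_gt0 ?ltr0n // mulrAC ler_pdivrMr ?ltr0n //.
rewrite !natXZ !natRZ -!RmultE -!mult_IZR; apply/RleP; apply: IZR_le.
by apply/Z.leb_le; vm_compute.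
Qed.

Lemma L2 : (150`!%:R : R) * (300%:R^-1)^+150 < (4339%:R/10000%:R)^+300.
Proof.
rewrite exprVn expr_div_n ltr_pdivlMr ?exprn_gt0 ?ltr0n // mulrAC ltr_pdivrMr ?exprn_gt0 ?ltr0n //.
rewrite factZ !natXZ -!RmultE -!mult_IZR; apply/RltP; apply: IZR_lt.
by apply/Z.ltb_lt; vm_compute.
Qed.

Lemma gen2 (F : realFieldType) : (4339%:R / 10000%:R : F) = 4^-1 + 2^-1 * (3678%:R / 10000%:R).
Proof. by field. Qed.

Theorem mainTheorem15 :
  exists (N : nat) (A : 'M[R]_N),
    (0 < N)%nat /\ doubly_stochastic A /\ per A < LMS A.
Proof.
have hm : (0 < 150)%nat by [].
exists (150+150)%nat, (Am R 150); split; first by [].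
split; first exact: (Am_ds R 150 hm).
apply: (le_lt_trans (Am_per R 150)); apply: (lt_le_trans _ (Am_lms R 150 hm)).
rewrite /cc.
change (150+150)%nat with 300%nat.
change (300.-1)%nat with 299%nat.
apply: (lt_le_trans L2); apply: lerXn2r.
- by rewrite nnegrE divr_ge0 ?ler0n.
- rewrite nnegrE addr_ge0 ?invr_ge0 ?ler0n // mulr_ge0 ?invr_ge0 ?ler0n //.
  by apply: (le_trans _ L1); rewrite divr_ge0 ?ler0n.
- have h := L1.
  have e1 := gen2 R.
  by rewrite e1 lerD2l ler_wpM2l // ?invr_ge0 ?ler0n.
Qed.
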